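(* If all jobs are infinitesimal, then for any constant $\epsilon\in(0,1)$ and any $\alpha\in(0,1)$, IPR with $\rho=2$ is a $(1+\epsilon)(1+\alpha)$-consistent and $(1+1/\alpha)$-robust partitioning algorithm.
   Context: Scheduling with Speed Predictions (SSP). Jobs with processing times are processed by $m$ machines with true speeds $s_1,\dots,s_m>0$; processing load $q$ on machine $i$ takes time $q/s_i$. For a bag $B$, $p(B)$ is its total processing time. In the partitioning stage the algorithm receives the jobs and predicted speeds $\hat{\mathbf s}\ge0$ (not $\mathbf s$) and partitions the jobs into $m$ possibly empty bags. In the scheduling stage $\mathbf s$ is revealed and each bag is assigned whole to a machine; the makespan is $\max_i(\text{total processing time on } i)/s_i$. $opt(\mathbf p,\mathbf s)$ is the minimum makespan of assigning the individual jobs knowing $\mathbf s$. A partitioning algorithm is $c$-consistent (resp. $\beta$-robust) if the two-stage algorithm that runs it and then assigns the bags optimally has makespan at most $c\cdot opt(\mathbf p,\mathbf s)$ whenever $\hat{\mathbf s}=\mathbf s$ (resp. at most $\beta\cdot opt(\mathbf p,\mathbf s)$ for all predictions and speeds). Infinitesimal jobs: all jobs have the same extremely small processing time, so that the total load can be divided into bags of arbitrary total processing times; in particular the LPT redistribution below splits the pooled load perfectly evenly. Algorithm IPR. Input: predicted speeds $\hat s_1\ge\dots\ge\hat s_m$, jobs, $\alpha$, accuracy $\epsilon\in(0,1)$, $\rho\ge1$. (1) Compute a partition $B_1,\dots,B_m$ with $p(B_1)\ge\dots\ge p(B_m)$ such that putting $B_i$ on machine $i$ has makespan at most $(1+\epsilon)opt(\mathbf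 p,\hat{\mathbf s})$ under speeds $\hat{\mathbf s}$. (2) Set $\overline{OPT}_C=\max_i p(B_i)/\hat s_i$, $\mathcal M_i=\{B_i\}$. (3) While $\max\{p(B): B\in\cup_i\mathcal M_i, |B|\ge2\}>\rho\min\{p(B):B\in\cup_i\mathcal M_i\}$: compute $\mathcal M'=$ LPT-Rebalance$(\mathcal M)$; if $\max_i\sum_{B\in\mathcal M'_i}p(B)/\hat s_i>(1+\alpha)\overline{OPT}_C$ return the current bags; else $\mathcal M\leftarrow\mathcal M'$. (4) Return the bags $\cup_i\mathcal M_i$. LPT-Rebalance: let $B_{\min}$ be a bag of minimum $p(B)$, $\mathcal M_{\max}$ a collection containing a bag of maximum $p(B)$ among bags with at least two jobs; move $B_{\min}$ into $\mathcal M_{\max}$, let $\ell=|\mathcal M_{\max}|$, pool its jobs and redistribute them into $\ell$ new bags by LPT (jobs in non-increasing processing time, each into a currently least-loaded bag). *)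

(* Defs.v *)
From HB Require Import structures.
From mathcomp Require Import all_boot all_order all_algebra.
From mathcomp Require Import all_classical all_reals ereal.
Set Implicit Arguments. Unset Strict Implicit. Unset Printing Implicit Defensive.
Import Order.TTheory GRing.Theory Num.Theory.
Local Open Scope ring_scope.
Local Open Scope classical_set_scope.

(* Model of SSP with infinitesimal jobs: the jobs are described only by their
   total processing time P; a bag is described by its total processing time
   (a nonnegative real). *)

Section SSP.
Variable R : realType.
Variable m : nat.

Definition ptime (l s : R) : \bar R :=
  if s == 0 then (if l == 0 then 0%E else +oo%E) else (l / s)%:E.

Definition makespan (s x : 'I_m -> R) : \bar R :=
  \big[maxe/-oo%E]_(i < m) ptime (x i) (s i).

(* opt(p, s) for infinitesimal jobs of total load P: the best makespan over
   all ways of dividing the load among the machines (assigning the individual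
   jobs, which can realize any division). *)
Definition divisions (P : R) : set ('I_m -> R) :=
  [set x | (forall i, 0 <= x i) /\ \sum_(i < m) x i = P].

Definition opt (P : R) (s : 'I_m -> R) : \bar R :=
  ereal_inf [set makespan s x | x in divisions P].

(* Scheduling stage: bags (a list of bag loads) are assigned whole to
   machines, optimally w.r.t. the true speeds s. *)
Definition bag_loads (bags : seq R) (sigma : {ffun 'I_(size bags) -> 'I_m})
  : 'I_m -> R :=
  fun i => \sum_(j < size bags | sigma j == i) bags`_j.

Definition sched_makespan (s : 'I_m -> R) (bags : seq R) : \bar R :=
  \big[mine/+oo%E]_(sigma : {ffun 'I_(size bags) -> 'I_m})
     makespan s (bag_loads sigma).

(* A (possibly nondeterministic) partitioning algorithm for total load P:
   a relation between predicted speeds and the possible outputs (lists of bag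
   loads). *)
Definition part_alg := ('I_m -> R) -> seq R -> Prop.

Definition speeds_pos (s : 'I_m -> R) := forall i, 0 < s i.
Definition speeds_nneg (s : 'I_m -> R) := forall i, 0 <= s i.
Definition nonincr (s : 'I_m -> R) := forall i j : 'I_m, (i <= j)%N -> s j <= s i.

(* Predictions are given sorted (the algorithm's input convention, w.l.o.g.
   after relabelling the machines). *)
Definition consistent (P : R) (A : part_alg) (c : R) :=
  forall (s : 'I_m -> R) (out : seq R), speeds_pos s -> nonincr s ->
    A s out -> (sched_makespan s out <= c%:E * opt P s)%E.

Definition robust (P : R) (A : part_alg) (beta : R) :=
  forall (shat s : 'I_m -> R) (out : seq R),
    speeds_nneg shat -> nonincr shat -> speeds_pos s ->
    A shat out -> (sched_makespan s out <= beta%:E * opt P s)%E.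

(* A state is the family of collections M_i (lists of bag loads). *)
Definition state := 'I_m -> seq R.

Definition allbags (M : state) : seq R := flatten [seq M i | i <- enum 'I_m].

Definition coll_load (M : state) (i : 'I_m) : R := \sum_(x <- M i) x.

Definition state_makespan (shat : 'I_m -> R) (M : state) : \bar R :=
  makespan shat (coll_load M).

(* With infinitesimal jobs, a bag has at least two jobs iff its processing
   time is positive.  Loop condition:
   max{p(B) : |B| >= 2} > rho * min{p(B)}. *)
Definition loop_cond (rho : R) (M : state) : Prop :=
  exists x y, [/\ x \in allbags M, y \in allbags M, 0 < x & rho * y < x].

(* LPT-Rebalance: move a minimum bag (found in collection imin) into a
   collection imax containing a maximum bag among bags with >= 2 jobs; pool
   the l bags of that collection and split the pooled load evenly (LPT on
   infinitesimal jobs) into l new bags. *)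
Definition rebalance (M M' : state) : Prop :=
  exists (imin imax : 'I_m) (xmin xmax : R),
    [/\ xmin \in M imin /\ (forall y, y \in allbags M -> xmin <= y),
        xmax \in M imax, 0 < xmax,
        (forall y, y \in allbags M -> 0 < y -> y <= xmax) &
        (let M1 := fun i => if i == imin then rem xmin (M i) else M i in
         let l := (size (M1 imax)).+1 in
         let L := xmin + \sum_(y <- M1 imax) y in
         M' = fun i => if i == imax then nseq l (L / l%:R) else M1 i)].

Inductive ipr_loop (shat : 'I_m -> R) (alpha rho : R) (OPTC : \bar R)
  : state -> seq R -> Prop :=
| ipr_stop M : ~ loop_cond rho M -> ipr_loop shat alpha rho OPTC M (allbags M)
| ipr_exceed M M' : loop_cond rho M -> rebalance M M' ->
    ((1 + alpha)%:E * OPTC < state_makespan shat M')%E ->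
    ipr_loop shat alpha rho OPTC M (allbags M)
| ipr_step M M' out : loop_cond rho M -> rebalance M M' ->
    (state_makespan shat M' <= (1 + alpha)%:E * OPTC)%E ->
    ipr_loop shat alpha rho OPTC M' out -> ipr_loop shat alpha rho OPTC M out.

Definition IPR (P alpha eps rho : R) : part_alg :=
  fun shat out =>
    exists b : 'I_m -> R,
      [/\ (forall i, 0 <= b i), \sum_(i < m) b i = P,
          (forall i j : 'I_m, (i <= j)%N -> b j <= b i),
          (makespan shat b <= (1 + eps)%:E * opt P shat)%E &
          ipr_loop shat alpha rho (makespan shat b) (fun i => [:: b i]) out].

End SSP.

(* Main.v *)
Require Import Defs.
From HB Require Import structures.
From mathcomp Require Import all_boot all_order all_algebra.
From mathcomp Require Import all_classical all_reals ereal.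
From mathcomp Require Import ring lra.
Import Order.TTheory GRing.Theory Num.Theory.
Local Open Scope ring_scope.
Set Implicit Arguments. Unset Strict Implicit.

Lemma greedy (R : realType) (m n : nat) (s : 'I_m -> R) (x : 'I_n -> R)
  (c rho T : R) :
  (0 < m)%N -> n = m -> (forall j, 0 <= x j) -> (forall j t, x j <= rho * x t) ->
  2 <= c -> rho <= c -> (forall i, 0 <= s i) -> 0 <= T ->
  c * (\sum_(j < n) x j) <= T * \sum_(i < m) s i ->
  forall D : {set 'I_n}, exists f : 'I_n -> 'I_m,
    forall i, \sum_(j in D | f j == i) x j <= s i * T.
Proof.
move=> m0 nm x0 xrho c2 rc s0 T0 cPT D.
have [k Hk] : exists k, #|D| = k by exists #|D|.
elim: k D Hk => [|k IH] D Hk.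
  exists (fun _ => Ordinal m0) => i.
  rewrite (cards0_eq Hk) big1 ?mulr_ge0 //.
  by move=> j; rewrite inE.
have : (0 < #|D|)%N by rewrite Hk.
rewrite card_gt0 => /set0Pn [j0 Hj0].
case: (@arg_minP _ _ _ j0 (fun t => t \in D) x Hj0) => j jD jmin.
have {}jD : j \in D := jD.
have {}jmin : forall t, t \in D -> x j <= x t := jmin.
have HD' : #|D :\ j| = k by move: Hk; rewrite (cardsD1 j) jD => -[].
have [f Hf] := IH _ HD'.
have [i Hi] : exists i, \sum_(t in D :\ j | f t == i) x t + x j <= s i * T.
  apply/not_existsP => H.
  have H' : forall i, s i * T < \sum_(t in D :\ j | f t == i) x t + x j.
    by move=> i; rewrite ltNge; apply/negP => /H.
  have := @ltr_sum _ _ (index_enum 'I_m) predT _ _ _ (fun i _ => H' i).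
  rewrite -mulr_suml big_split /= -(partition_big f predT) // sumr_const card_ord.
  set a := \sum_(t in D :\ j) x t.
  have HP : \sum_(t < n) x t = \sum_(t in D) x t + \sum_(t | t \notin D) x t.
    by rewrite (bigID (fun t => t \in D)).
  have HDj : \sum_(t in D) x t = x j + a by rewrite (big_setD1 j).
  have HA1 : x j *+ #|D| <= x j + a.
    rewrite -HDj -sumr_const; apply: ler_sum => t tD; exact: jmin.
  have HA2 : x j *+ #|[predC D]| <= rho * \sum_(t | t \notin D) x t.
    rewrite -sumr_const mulr_sumr; apply: ler_sum => t _; exact: xrho.
  have Hm : x j *+ m = x j *+ #|D| + x j *+ #|[predC D]|.
    by rewrite -mulrnDr cardC card_ord nm.
  set b := \sum_(t | t \notin D) x t in HP HA2.
  have b0 : 0 <= b by apply: sumr_ge0.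
  have a0 : 0 <= a by apply: sumr_ge0.
  have := x0 j.
  rewrite HP HDj in cPT.
  rewrite Hm.
  move: HA1 HA2 cPT.
  set A1 := x j *+ #|D|; set A2 := x j *+ #|[predC D]|.
  have : 0 <= (c - rho) * b by rewrite mulr_ge0 // subr_ge0.
  have : has predT (index_enum 'I_m).
    by apply/hasP; exists (Ordinal m0); rewrite ?mem_index_enum.
  move=> -> /=.
  have : 0 <= (c - 2) * (x j + a) by rewrite mulr_ge0 ?subr_ge0 ?addr_ge0.
  move=> h0 h1 h2 h3 h4 h5 /(_ isT) h6; rewrite mulrC in h6; clearbody A1 A2 a b; move: (T * _) h4 h6 => TS h4 h6; clear -h0 h1 h2 h3 h4 h5 h6; nra.
exists (fun t => if t == j then i else f t) => i'.
rewrite big_mkcondr /= (big_setD1 j) //= eqxx.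
rewrite (eq_bigr (fun t => if f t == i' then x t else 0)); last first.
  by move=> t /setD1P [] /negbTE ->.
rewrite -big_mkcondr /=.
case: eqP => [<-|_]; first by rewrite addrC.
by rewrite add0r; exact: Hf.
Qed.

Lemma sched_bound (R : realType) (m : nat) (s : 'I_m -> R) (bs : seq R)
  (c rho : R) :
  (0 < m)%N -> (forall i, 0 < s i) -> size bs = m ->
  (forall x, x \in bs -> 0 <= x) ->
  (forall x y, x \in bs -> y \in bs -> x <= rho * y) -> 2 <= c -> rho <= c ->
  (sched_makespan s bs <= (c * (\sum_(x <- bs) x) / \sum_(i < m) s i)%:E)%E.
Proof.
move=> m0 s0 sz b0 brho c2 rc.
set S := \sum_(i < m) s i.
have S0 : 0 < S.
  rewrite /S (bigD1 (Ordinal m0)) //=.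
  have := s0 (Ordinal m0); have : 0 <= \sum_(i < m | i != Ordinal m0) s i.
    by apply: sumr_ge0 => i _; apply: ltW.
  lra.
set P := \sum_(x <- bs) x.
have P0 : 0 <= P by rewrite /P big_seq; apply: sumr_ge0 => x; exact: b0.
have HP : P = \sum_(j < size bs) bs`_j by rewrite /P (big_nth 0) big_mkord.
set T := c * P / S.
have T0 : 0 <= T by rewrite /T divr_ge0 ?mulr_ge0 ?(ltW S0) //; lra.
have x0 : forall j : 'I_(size bs), 0 <= bs`_j by move=> j; apply: b0; apply: mem_nth.
have cPT : c * \sum_(j < size bs) bs`_j <= T * S.
  by rewrite -HP /T divfK // gt_eqF.
have [f Hf] := @greedy R m (size bs) (fun i => (s i)) (fun j => bs`_j) c rho T m0 sz x0
  (fun j t => brho _ _ (mem_nth 0 (ltn_ord j)) (mem_nth 0 (ltn_ord t)))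
  c2 rc (fun i => ltW (s0 i)) T0 cPT finset.setT.
apply: le_trans (bigmin_le _ [ffun j => f j] _) _.
apply/bigmax_leP; split; first exact: leNye.
move=> i _.
rewrite /ptime gt_eqF // lee_fin ler_pdivrMr //.
rewrite mulrC; apply: le_trans (Hf i).
rewrite /bag_loads le_eqVlt; apply/orP; left; apply/eqP.
by apply: eq_bigl => j; rewrite ffunE finset.in_setT.
Qed.

Lemma allbagsP (R : realType) m (M : state R m) x :
  reflect (exists i, x \in M i) (x \in allbags M).
Proof.
apply: (iffP flattenP) => [[l /mapP [i _ ->] xi]|[i xi]]; first by exists i.
by exists (M i) => //; apply: map_f; rewrite mem_enum.
Qed.

Lemma sum_allbags (R : realType) m (M : state R m) :
  \sum_(x <- allbags M) x = \sum_(i < m) coll_load M i.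
Proof.
by rewrite /allbags big_flatten /= big_map big_enum.
Qed.

Lemma size_allbags (R : realType) m (M : state R m) :
  (size (allbags M))%:R = \sum_(i < m) ((size (M i))%:R : R).
Proof.
rewrite /allbags size_flatten /shape -map_comp sumnE big_map big_enum /=.
by rewrite natr_sum.
Qed.

Lemma sum_zip (R : realType) m (bs : seq R) (tg : seq 'I_m) i0 i :
  size bs = size tg ->
  \sum_(j < size bs | nth i0 tg j == i) bs`_j =
  \sum_(p <- zip bs tg | p.2 == i) p.1.
Proof.
elim: bs tg => [|b bs IH] [|t tg] //=.
  by rewrite big_ord0 big_nil.
move=> [] /IH H.
rewrite big_mkcond big_ord_recl /= big_cons /=.
rewrite -H [in RHS]big_mkcond /=.
by case: (t == i); rewrite ?add0r.
Qed.

Lemma sum_zip_nseq (R : realType) m (s : seq R) (k i : 'I_m) :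
  \sum_(p <- zip s (nseq (size s) k) | p.2 == i) p.1 =
  if k == i then \sum_(x <- s) x else 0.
Proof.
elim: s => [|x s IH] /=; first by rewrite !big_nil; case: ifP.
rewrite big_cons /= IH big_cons.
by case: (k == i).
Qed.

Lemma sched_le_state (R : realType) m (s : 'I_m -> R) (M : state R m) :
  (0 < m)%N -> (sched_makespan s (allbags M) <= state_makespan s M)%E.
Proof.
move=> m0.
set tg := flatten [seq nseq (size (M k)) k | k <- enum 'I_m].
have sz : size (allbags M) = size tg.
  rewrite /allbags /tg !size_flatten /shape -!map_comp.
  by congr sumn; apply: eq_map => k /=; rewrite size_nseq.
pose sigma := [ffun j : 'I_(size (allbags M)) => nth (Ordinal m0) tg j].
apply: le_trans (bigmin_le _ sigma _) _.
rewrite /state_makespan /makespan le_eqVlt; apply/orP; left; apply/eqP.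
apply: eq_bigr => i _; congr ptime.
rewrite /bag_loads (eq_bigl (fun j : 'I_(size (allbags M)) => nth (Ordinal m0) tg j == i)); last first.
  by move=> j; rewrite ffunE.
rewrite sum_zip //.
have -> : forall r : seq 'I_m,
   \sum_(p <- zip (flatten [seq M k | k <- r]) (flatten [seq nseq (size (M k)) k | k <- r]) | p.2 == i) p.1
   = \sum_(k <- r | k == i) coll_load M k.
  elim => [|k r IH]; first by rewrite !big_nil.
  rewrite /= zip_cat ?size_nseq // big_cat /= IH sum_zip_nseq big_cons.
  by case: ifP; rewrite ?add0r.
by rewrite big_enum_cond big_pred1_eq.
Qed.

Lemma opt_lb (R : realType) m (P : R) (s : 'I_m -> R) :
  (0 < m)%N -> (forall i, 0 < s i) ->
  ((P / \sum_(i < m) s i)%:E <= opt P s)%E.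
Proof.
move=> m0 s0.
have S0 : 0 < \sum_(i < m) s i.
  rewrite (bigD1 (Ordinal m0)) //=.
  have := s0 (Ordinal m0); have : 0 <= \sum_(i < m | i != Ordinal m0) s i.
    by apply: sumr_ge0 => i _; apply: ltW.
  lra.
apply: le_ereal_inf_tmp => y [x [x0 xs] <-].
rewrite leNgt; apply/negP => /bigmax_ltP [_ H].
have H' : forall i, x i < (P / \sum_(k < m) s k) * s i.
  move=> i; have := H i isT; rewrite /ptime (gt_eqF (s0 i)) lte_fin.
  by rewrite (ltr_pdivrMr _ _ (s0 i)).
have : has predT (index_enum 'I_m).
  by apply/hasP; exists (Ordinal m0); rewrite ?mem_index_enum.
move=> /ltr_sum /(_ (fun i _ => H' i)).
by rewrite xs -mulr_sumr divfK ?gt_eqF // ltxx.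
Qed.

Lemma ptime_ge0 (R : realType) (l s : R) : 0 <= l -> 0 <= s -> (0 <= ptime l s)%E.
Proof.
move=> l0 s0; rewrite /ptime; case: ifP => _; first by case: ifP.
by rewrite lee_fin divr_ge0.
Qed.

Lemma ptime_le (R : realType) (a b s : R) : 0 <= a <= b -> 0 <= s ->
  (ptime a s <= ptime b s)%E.
Proof.
move=> /andP [a0 ab] s0; rewrite /ptime; case: ifP => _.
  case: ifP => [_|/negbT an0]; first by case: ifP.
  have : b != 0 by rewrite gt_eqF // (lt_le_trans _ ab) // lt_def an0 a0.
  by move/negbTE => ->.
by rewrite lee_fin ler_wpM2r // invr_ge0.
Qed.

Lemma ptime_pos (R : realType) (l s : R) : 0 < s -> ptime l s = (l / s)%:E.
Proof. by move=> s0; rewrite /ptime gt_eqF. Qed.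

Lemma le_makespan (R : realType) m (s x : 'I_m -> R) i :
  (ptime (x i) (s i) <= makespan s x)%E.
Proof. exact: le_bigmax. Qed.

Lemma loop_inv (R : realType) m (shat : 'I_m -> R) (alpha rho : R) (OPTC : \bar R)
  (Q : state R m -> Prop) M out :
  ipr_loop shat alpha rho OPTC M out -> Q M ->
  (forall M M', Q M -> loop_cond rho M -> rebalance M M' ->
     (state_makespan shat M' <= (1 + alpha)%:E * OPTC)%E -> Q M') ->
  exists M0, [/\ Q M0, out = allbags M0 &
    (~ loop_cond rho M0 \/ exists M', [/\ loop_cond rho M0, rebalance M0 M' &
        ((1 + alpha)%:E * OPTC < state_makespan shat M')%E])].
Proof.
move=> H QM step; elim: H QM => {M out}.
- by move=> M nc QM; exists M; split => //; left.
- by move=> M M' lc rb ex QM; exists M; split => //; right; exists M'.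
- move=> M M' out lc rb le _ IH QM; apply: IH; exact: step QM lc rb le.
Qed.


Definition IInv (R : realType) m (shat : 'I_m -> R) (P alpha : R) (OPTC : \bar R)
  (M : state R m) : Prop :=
 [/\ (forall i x, x \in M i -> 0 <= x),
     \sum_(i < m) ((size (M i))%:R : R) = m%:R,
     \sum_(i < m) coll_load M i = P,
     (forall i x y, x \in M i -> y \in M i -> x = y) &
     (forall r, OPTC = r%:E ->
        (state_makespan shat M <= (1 + alpha)%:E * r%:E)%E /\
        exists mu, (forall y, y \in allbags M -> mu <= y) /\
          forall i, coll_load M i <= shat i * r + ((size (M i)).-1)%:R * mu)].

Lemma sum_lb (R : realType) (s : seq R) (c : R) :
  (forall x, x \in s -> c <= x) -> (size s)%:R * c <= \sum_(x <- s) x.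
Proof.
elim: s => [|a s IH] H; first by rewrite big_nil mul0r.
rewrite big_cons /= -addn1 natrD mulrDl mul1r addrC lerD //.
  by apply: H; rewrite mem_head.
by apply: IH => x xs; apply: H; rewrite inE xs orbT.
Qed.

Lemma sum_ge0s (R : realType) (s : seq R) :
  (forall x, x \in s -> 0 <= x) -> 0 <= \sum_(x <- s) x.
Proof. by move=> H; rewrite big_seq; apply: sumr_ge0. Qed.

Lemma sum_nseq (R : realType) n (a : R) : \sum_(x <- nseq n a) x = a *+ n.
Proof. by elim: n => [|n IH]; rewrite ?big_nil // big_cons IH mulrS. Qed.

Lemma sum_shift (R : realType) m (F G H : 'I_m -> R) (a b : 'I_m) (d : R) :
  (forall i, F i = H i + (i == a)%:R * d) ->
  (forall i, G i = H i + (i == b)%:R * d) ->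
  \sum_(i < m) F i = \sum_(i < m) G i.
Proof.
move=> HF HG.
have E : forall c : 'I_m, \sum_(i < m) (i == c)%:R * d = d.
  move=> c; rewrite (bigD1 c) //= eqxx mul1r big1 ?addr0 //.
  by move=> i /negbTE ->; rewrite mul0r.
rewrite (eq_bigr _ (fun i _ => HF i)) (eq_bigr _ (fun i _ => HG i)).
by rewrite !big_split /= !E.
Qed.

Definition remM (R : realType) m (M : state R m) (imin : 'I_m) (xmin : R) : state R m :=
  fun i => if i == imin then rem xmin (M i) else M i.

Definition newM (R : realType) m (M : state R m) (imin imax : 'I_m) (xmin : R) : state R m :=
  fun i => if i == imax then
     nseq (size (remM M imin xmin imax)).+1
       ((xmin + \sum_(y <- remM M imin xmin imax) y) / (size (remM M imin xmin imax)).+1%:R)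
   else remM M imin xmin i.

Lemma rebalanceE (R : realType) m (M M' : state R m) : rebalance M M' ->
  exists imin imax xmin xmax, [/\ xmin \in M imin /\ (forall y, y \in allbags M -> xmin <= y),
     xmax \in M imax, 0 < xmax,
     (forall y, y \in allbags M -> 0 < y -> y <= xmax) &
     M' = newM M imin imax xmin].
Proof.
case=> imin [imax [xmin [xmax [[H1 H2] H3 H4 H5 H6]]]].
by exists imin, imax, xmin, xmax; split.
Qed.

Lemma remM_sub (R : realType) m (M : state R m) imin xmin i x :
  x \in remM M imin xmin i -> x \in M i.
Proof. by rewrite /remM; case: ifP => // _; apply: mem_rem. Qed.

Lemma remM_load (R : realType) m (M : state R m) imin xmin i :
  xmin \in M imin ->
  coll_load M i = coll_load (remM M imin xmin) i + (i == imin)%:R * xmin.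
Proof.
move=> xM; rewrite /coll_load /remM; case: eqP => [->|_]; last by rewrite mul0r addr0.
by rewrite (perm_big _ (perm_to_rem xM)) big_cons mul1r addrC.
Qed.

Lemma remM_size (R : realType) m (M : state R m) imin xmin i :
  xmin \in M imin ->
  ((size (M i))%:R : R) = (size (remM M imin xmin i))%:R + (i == imin)%:R.
Proof.
move=> xM; rewrite /remM; case: eqP => [->|_]; last by rewrite addr0.
rewrite size_rem // -natrD addn1 prednK //.
by case: (M imin) xM.
Qed.

Lemma newM_load (R : realType) m (M : state R m) imin imax xmin i :
  coll_load (newM M imin imax xmin) i =
  coll_load (remM M imin xmin) i + (i == imax)%:R * xmin.
Proof.
rewrite /coll_load /newM; case: eqP => [->|_]; last by rewrite mul0r addr0.
have H : forall (a : R) n, a / n.+1%:R *+ n.+1 = a.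
  by move=> a n; rewrite -(mulr_natr (a / n.+1%:R)) divfK // pnatr_eq0.
by rewrite sum_nseq H mul1r addrC.
Qed.

Lemma newM_size (R : realType) m (M : state R m) imin imax xmin i :
  ((size (newM M imin imax xmin i))%:R : R) =
  (size (remM M imin xmin i))%:R + (i == imax)%:R.
Proof.
rewrite /newM; case: eqP => [->|_]; last by rewrite addr0.
by rewrite size_nseq -addn1 natrD.
Qed.

Lemma inv_step (R : realType) m (shat : 'I_m -> R) (P alpha : R) (OPTC : \bar R)
  (M M' : state R m) :
  IInv shat P alpha OPTC M -> rebalance M M' ->
  (state_makespan shat M' <= (1 + alpha)%:E * OPTC)%E -> IInv shat P alpha OPTC M'.
Proof.
move=> [IA IB IC ID IE] /rebalanceE [imin [imax [xmin [xmax [[xminM xminle] xmaxM xmax0 xmaxge ->]]]]] Hms.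
set M1 := remM M imin xmin.
have xmin0 : 0 <= xmin := IA _ _ xminM.
have xminA : xmin \in allbags M by apply/allbagsP; exists imin.
have M1ge : forall i x, x \in M1 i -> xmin <= x.
  by move=> i x /remM_sub xi; apply: xminle; apply/allbagsP; exists i.
have newge : forall i x, x \in newM M imin imax xmin i -> xmin <= x.
  move=> i x; rewrite /newM; case: eqP => [_|_]; last exact: M1ge.
  rewrite mem_nseq => /andP [_ /eqP ->].
  rewrite ler_pdivlMr ?ltr0Sn //.
  have := sum_lb (M1ge imax); rewrite -/M1.
  move: (\sum_(y <- M1 imax) y) => S.
  rewrite -addn1 natrD; nra.
split.
- by move=> i x /newge; apply: le_trans.
- rewrite -IB; apply: (@sum_shift _ _ _ _ (fun i => (size (M1 i))%:R) imax imin 1) => i.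
    by rewrite newM_size mulr1.
  by rewrite (@remM_size _ _ M imin xmin i xminM) mulr1.
- rewrite -IC; apply: (@sum_shift _ _ _ _ (fun i => coll_load M1 i) imax imin xmin) => i.
    by rewrite newM_load.
  by rewrite (@remM_load _ _ M imin xmin i xminM).
- move=> i x y; rewrite /newM; case: eqP => _.
    by rewrite !mem_nseq => /andP[_ /eqP->] /andP[_ /eqP->].
  by move=> /remM_sub hx /remM_sub hy; exact: ID hx hy.
move=> r Er; split; first by rewrite -Er.
have [_ [mu [muge Hmu]]] := IE r Er.
have muxmin : mu <= xmin := muge _ xminA.
exists xmin; split.
  by move=> y /allbagsP [i]; exact: newge.
move=> i.
have Hi := Hmu i.
have HK : ((size (M i)).-1)%:R * mu <= ((size (M i)).-1)%:R * xmin.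
  by rewrite ler_wpM2l.
have Kmin : (0 < size (M imin))%N by case: (M imin) xminM.
have Kmax : (0 < size (M imax))%N by case: (M imax) xmaxM.
rewrite newM_load.
case: (eqVneq i imax) => [Eimax|ne].
  rewrite /newM Eimax eqxx size_nseq /= mul1r.
  rewrite /M1 /remM /coll_load; case: eqP => [Emin|_].
    move: Hi HK; rewrite Eimax => Hi HK.
    have xM : xmin \in M imax by rewrite Emin.
    rewrite size_rem //.
    have E : \sum_(x <- M imax) x = \sum_(x <- rem xmin (M imax)) x + xmin.
      by rewrite (perm_big _ (perm_to_rem xM)) big_cons addrC.
    by rewrite -E; apply: le_trans Hi _; rewrite lerD2l.
  move: Hi HK; rewrite Eimax /coll_load => Hi HK.
  have -> : ((size (M imax))%:R : R) = ((size (M imax)).-1)%:R + 1.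
    by rewrite natr1 prednK.
  lra.
rewrite /newM (negbTE ne) mul0r addr0.
rewrite /M1 /remM /coll_load; case: eqP => [Emin|_]; last first.
  by apply: le_trans Hi _; rewrite lerD2l.
rewrite Emin in Hi HK *.
have := @remM_load _ _ M imin xmin imin xminM; rewrite /coll_load /remM eqxx mul1r => E.
rewrite /coll_load E in Hi.
rewrite size_rem //.
have : (((size (M imin)).-1)%:R : R) <= ((size (M imin)).-1.-1)%:R + 1.
  by rewrite natr1 ler_nat leqSpred.
move: (((size (M imin)).-1)%:R : R) (((size (M imin)).-1.-1)%:R : R) HK Hi => a b HK Hi Hab.
nra.
Qed.

Lemma exceed_ratio (R : realType) m (shat : 'I_m -> R) (P alpha : R) (OPTC : \bar R)
  (M M' : state R m) :
  0 < alpha -> (forall i, 0 <= shat i) -> (0 <= OPTC)%E ->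
  IInv shat P alpha OPTC M -> rebalance M M' ->
  ((1 + alpha)%:E * OPTC < state_makespan shat M')%E ->
  forall x y, x \in allbags M -> y \in allbags M -> x <= (1 + alpha^-1) * y.
Proof.
move=> a0 s0 O0 [IA IB IC ID IE] rb.
case: OPTC O0 IE => [r| |] O0 IE; first last.
- by [].
- by rewrite gt0_muley ?lte_fin ?ltr_wpDr ?ltW // ltNge leey.
move=> Hex.
have [Hms [mu [muge Hmu]]] := IE r erefl.
have [imin [imax [xmin [xmax [[xminM xminle] xmaxM xmax0 xmaxge EM']]]]] := rebalanceE rb.
have xmin0 : 0 <= xmin := IA _ _ xminM.
have xminA : xmin \in allbags M by apply/allbagsP; exists imin.
have muxmin : mu <= xmin := muge _ xminA.
have [i Hi] : exists i, ((1 + alpha)%:E * r%:E < ptime (coll_load M' i) (shat i))%E.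
  apply/not_existsP => H; move: Hex; rewrite ltNge => /negP; apply.
  apply/bigmax_leP; split; first exact: leNye.
  by move=> i _; rewrite leNgt; apply/negP => hi; apply: (H i).
have load_ge0 : forall j, 0 <= coll_load (remM M imin xmin) j.
  by move=> j; apply: sum_ge0s => z /remM_sub; apply: IA.
have load1_le : forall j, coll_load (remM M imin xmin) j <= coll_load M j.
  move=> j; rewrite (@remM_load _ _ M imin xmin j xminM) lerDl.
  by apply: mulr_ge0.
have Hpt : forall j, (ptime (coll_load M j) (shat j) <= (1 + alpha)%:E * r%:E)%E.
  by move=> j; apply: le_trans Hms; apply: le_makespan.
case: (eqVneq i imax) => [Ei|ne]; last first.
  exfalso; move: Hi; rewrite EM' newM_load (negbTE ne) mul0r addr0.
  rewrite ltNge => /negP; apply; apply: le_trans (Hpt i).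
  by apply: ptime_le => //; rewrite load_ge0 load1_le.
move: Hi; rewrite Ei EM' newM_load eqxx mul1r => Hi.
set K := size (M imax).
have Kmax : (0 < K)%N by rewrite /K; case: (M imax) xmaxM.
have loadK : K%:R * xmax <= coll_load M imax.
  by apply: sum_lb => z zM; rewrite (ID _ _ _ zM xmaxM).
have HK : K%:R = (K.-1)%:R + 1 :> R by rewrite natr1 prednK.
have Hb := Hmu imax; rewrite -/K in Hb.
have HK2 : (K.-1)%:R * mu <= (K.-1)%:R * xmin by rewrite ler_wpM2l.
have sp : 0 < shat imax.
  rewrite lt_def s0 andbT; apply/negP => /eqP sz.
  have := Hpt imax; rewrite /ptime sz eqxx.
  have : coll_load M imax != 0.
    rewrite gt_eqF // (lt_le_trans _ loadK) // mulr_gt0 // HK.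
    by rewrite ltr_wpDl.
  by move/negbTE => ->; rewrite leNgt ltey.
move: Hi; rewrite ptime_pos // -EFinM lte_fin ltr_pdivlMr // => Hi.
have L1 := load1_le imax.
have k0 : (0 : R) <= (K.-1)%:R by [].
rewrite -mulrA [r * _]mulrC in Hi.
have key : alpha * xmax < (1 + alpha) * xmin.
  move: (coll_load M imax) (coll_load (remM M imin xmin) imax) (shat imax * r)
    ((K.-1)%:R : R) loadK HK Hb HK2 Hi L1 k0 => l l1 u k loadK HK Hb HK2 Hi L1 k0.
  rewrite HK in loadK; clear HK.
  have st1 : alpha * u < (k + 1) * xmin.
    clear -Hi L1 Hb HK2; lra.
  have st2 : alpha * ((k + 1) * xmax - k * xmin) <= alpha * u.
    apply: ler_wpM2l; first exact: ltW.
    clear -Hb HK2 loadK; lra.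
  rewrite ltNge; apply/negP => h.
  have h2 : (k + 1) * ((1 + alpha) * xmin) <= (k + 1) * (alpha * xmax).
    by rewrite ler_wpM2l // addr_ge0.
  have h3 : 0 <= alpha * xmin by rewrite mulr_ge0 // ltW.
  clear -st1 st2 h2 h3 k0; nra.
move=> x y xA yA.
have yge := xminle _ yA.
have y0 : 0 <= y by apply: le_trans yge.
have e : (1 + alpha^-1) * y = ((1 + alpha) * y) / alpha.
  by field; rewrite gt_eqF.
rewrite e ler_pdivlMr // mulrC.
have h1 : (1 + alpha) * xmin <= (1 + alpha) * y by rewrite ler_wpM2l // addr_ge0 // ltW.
case: (ltrP 0 x) => x0.
  have := xmaxge _ xA x0 => hx.
  have : alpha * x <= alpha * xmax by rewrite ler_wpM2l // ltW.
  lra.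
have : alpha * x <= 0 by rewrite mulr_ge0_le0 // ltW.
have : 0 <= (1 + alpha) * y by rewrite mulr_ge0 // addr_ge0 // ltW.
lra.
Qed.

Theorem theorem4 (R : realType) (m : nat) (P eps alpha : R) :
  (0 < m)%N -> 0 < P ->
  0 < eps < 1 -> 0 < alpha < 1 ->
  @consistent R m P (@IPR R m P alpha eps 2) ((1 + eps) * (1 + alpha)) /\
  @robust R m P (@IPR R m P alpha eps 2) (1 + alpha^-1).
Proof.
move=> m0 P0 /andP [e0 e1] /andP [a0 a1].
have grow : forall x : \bar R, (0 <= x)%E -> (x <= (1 + alpha)%:E * x)%E.
  case => [r| |] // r0.
    by rewrite -EFinM lee_fin ler_peMl //; lra.
  by rewrite gt0_muley // lte_fin; lra.
have Ecl : forall b : 'I_m -> R, coll_load (fun i => [:: b i]) = b.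
  by move=> b; apply: boolp.funext => i; rewrite /coll_load big_seq1.
split.
  move=> s out spos _ [b [b0 bsum bdec bopt Hloop]].
  set OPTC := makespan s b.
  have O0 : (0 <= OPTC)%E.
    exact: le_trans (ptime_ge0 (b0 (Ordinal m0)) (ltW (spos (Ordinal m0))))
      (le_makespan s b (Ordinal m0)).
  have init : (state_makespan s (fun i => [:: b i]) <= (1 + alpha)%:E * OPTC)%E.
    by rewrite /state_makespan Ecl; apply: grow.
  have [M0 [QM0 -> _]] := loop_inv
    (Q := fun M => (state_makespan s M <= (1 + alpha)%:E * OPTC)%E) Hloop init
    (fun M M' _ _ _ h => h).
  apply: le_trans (sched_le_state s M0 m0) _; apply: le_trans QM0 _.
  rewrite mulrC EFinM -muleA; apply: lee_wpmul2l; first by rewrite lee_fin; lra.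
  exact: bopt.
move=> shat s out shat0 _ spos [b [b0 bsum bdec bopt Hloop]].
set OPTC := makespan shat b.
have O0 : (0 <= OPTC)%E.
  exact: le_trans (ptime_ge0 (b0 (Ordinal m0)) (shat0 (Ordinal m0)))
    (le_makespan shat b (Ordinal m0)).
have I0 : @IInv R m shat P alpha OPTC (fun i => [:: b i]).
  split.
  - by move=> i x; rewrite inE => /eqP ->.
  - by rewrite /= sumr_const card_ord.
  - by rewrite -bsum; apply: eq_bigr => i _; rewrite /coll_load big_seq1.
  - by move=> i x y; rewrite !inE => /eqP -> /eqP ->.
  move=> r Er; split.
    by rewrite /state_makespan Ecl -/OPTC Er; apply: grow; rewrite -Er.
  exists 0; split.
    by move=> y /allbagsP [i]; rewrite inE => /eqP ->.
  move=> i; rewrite Ecl /= mulr0 addr0.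
  have := le_makespan shat b i; rewrite -/OPTC Er /ptime.
  case: eqP => [->|sne].
    by case: eqP => [->|_]; rewrite ?mul0r // leNgt ltey.
  have sp : 0 < shat i by rewrite lt_def shat0 andbT; apply/eqP.
  by rewrite lee_fin ler_pdivrMr // mulrC.
have [M0 [IM0 -> fin]] := loop_inv Hloop I0
  (fun M M' IM _ rb h => inv_step IM rb h).
have c2 : 2 <= 1 + alpha^-1.
  have : 1 <= alpha^-1 by rewrite invf_ge1 // ltW.
  lra.
case: IM0 => IA IB IC ID IE.
have nonneg : forall x, x \in allbags M0 -> 0 <= x.
  by move=> x /allbagsP [i]; apply: IA.
have ratio : forall x y, x \in allbags M0 -> y \in allbags M0 ->
    x <= (1 + alpha^-1) * y.
  case: fin => [nlc | [M' [lc rb ex]]]; last first.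
    exact: exceed_ratio a0 shat0 O0 (And5 IA IB IC ID IE) rb ex.
  move=> x y xA yA.
  have y0 := nonneg _ yA.
  have : x <= 2 * y.
    rewrite leNgt; apply/negP => h; apply: nlc; exists x, y; split => //.
    by apply: le_lt_trans h; rewrite mulr_ge0.
  have : 2 * y <= (1 + alpha^-1) * y by rewrite ler_wpM2r.
  lra.
have sz : size (allbags M0) = m.
  by apply/eqP; rewrite -(eqr_nat R) size_allbags IB.
apply: le_trans (sched_bound m0 spos sz nonneg ratio c2 (lexx _)) _.
rewrite sum_allbags IC -mulrA EFinM; apply: lee_wpmul2l.
  by rewrite lee_fin; lra.
exact: opt_lb m0 spos.
Qed.
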